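(* Let $\Gamma$ act ergodically (and essentially freely, preserving the probability measure) on a standard Borel probability space $(X,\nu)$, and let $\pi:X\to\{0,1\}^{E}$ be a $\Gamma$-equivariant Borel map with $\nu(U^\infty)\neq0$. Then the restriction $\mathcal{R}^{\mathrm{cl}}_{|\infty}$ of the cluster equivalence relation to $U^\infty$ is ergodic (with respect to $\nu$ restricted to $U^\infty$) if and only if $(\nu,\pi)$ has indistinguishable infinite clusters.
   Context: $\Gamma$ is a finitely generated group with finite generating set $S$ (repetitions allowed). Its right Cayley graph $G=(V,E)$ has vertex set $V=\Gamma$ and edge set $E$ indexed by $S\times\Gamma$, the edge $(s,\gamma)$ going from $\gamma$ to $\gamma s$; $\Gamma$ acts on $G$ by left multiplication. Let $o$ be the identity vertex. Elements $\omega\in\{0,1\}^E$ are identified with spanning subgraphs of $G$; the connected components of $\omega$ are its clusters, and $\Gamma$ acts on $\{0,1\}^E$ by $(\gamma\omega)(e)=\omega(\gamma^{-1}e)$. $\mathcal{R}_\Gamma$ is the orbit equivalence relation of the action on $X$. The cluster equivalence subrelation $\mathcal{R}^{\mathrm{cl}}\subseteq\mathcal{R}_\Gamma$ is defined by: $x,y$ are equivalent iff there is $\gamma\in\Gamma$ with $\gamma^{-1}x=y$ and $o,\gamma o$ in the same cluster of $\pi(x)$. $U^\infty$ is the set of $x$ whose $\mathcal{R}^{\mathrm{cl}}$-class is infinite (equivalently, the cluster of $o$ in $\pi(x)$ is infinite). Let $\mathfrak{C}^{\mathrm{cl}}_\infty=\{(x,C):x\in X,\ C\subseteq V \text{ is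 the vertex set of an infinite cluster of }\pi(x)\}$, with $\Gamma$ acting diagonally $\gamma(x,C)=(\gamma x,\gamma C)$ (Borel structure on subsets of $V$ from $\{0,1\}^V$). $(\nu,\pi)$ has indistinguishable infinite clusters if for every $\Gamma$-invariant Borel $\mathcal{A}\subseteq\mathfrak{C}^{\mathrm{cl}}_\infty$, the set of $x\in X$ for which there exist both some $(x,C)\in\mathcal{A}$ and some $(x,C')\in\mathfrak{C}^{\mathrm{cl}}_\infty\setminus\mathcal{A}$ has $\nu$-measure $0$. An equivalence relation is ergodic if every invariant measurable set is null or conull. *)

(* Defs.v *)
From HB Require Import structures.
From mathcomp Require Import all_boot all_order all_algebra.
From mathcomp Require Import all_classical all_reals all_analysis.
From Stdlib Require Import Relations.Relation_Operators.

Set Implicit Arguments.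
Unset Strict Implicit.
Unset Printing Implicit Defensive.

Import Order.TTheory GRing.Theory Num.Theory.
Local Open Scope classical_set_scope.

Definition is_group (G : Type) (mul : G -> G -> G) (one : G) (inv : G -> G)
  : Prop :=
  [/\ (forall a b c, mul a (mul b c) = mul (mul a b) c),
      (forall a, mul one a = a), (forall a, mul a one = a),
      (forall a, mul (inv a) a = one) & (forall a, mul a (inv a) = one)].

Definition generates (G : Type) (mul : G -> G -> G) (one : G) (inv : G -> G)
  (k : nat) (s : 'I_k -> G) : Prop :=
  forall g : G, exists l : seq ('I_k * bool),
    g = foldr (fun p acc => mul (if p.2 then s p.1 else inv (s p.1)) acc) one l.

(* Edges are indexed by 'I_k * G; edge (i, g) goes from g to g * s i. *)
Definition config (G : Type) (k : nat) := 'I_k * G -> bool.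

Definition open_adj (G : Type) (mul : G -> G -> G) (k : nat) (s : 'I_k -> G)
  (omega : config G k) (u v : G) : Prop :=
  exists i : 'I_k, (omega (i, u) /\ v = mul u (s i)) \/
                   (omega (i, v) /\ u = mul v (s i)).

Definition connected (G : Type) (mul : G -> G -> G) (k : nat) (s : 'I_k -> G)
  (omega : config G k) : G -> G -> Prop :=
  clos_refl_trans G (open_adj mul s omega).

Definition cluster (G : Type) (mul : G -> G -> G) (k : nat) (s : 'I_k -> G)
  (omega : config G k) (v : G) : set G :=
  [set u | connected mul s omega v u].

Definition config_act (G : Type) (mul : G -> G -> G) (inv : G -> G) (k : nat)
  (g : G) (omega : config G k) : config G k :=
  fun e => omega (e.1, mul (inv g) e.2).

Definition standard_borel (d : measure_display) (X : measurableType d)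
  (R : realType) : Prop :=
  exists f : X -> R, [/\ injective f, measurable_fun setT f,
    measurable (range f) & forall A, measurable A -> measurable (f @` A)].

Section Measures.
Context (d : measure_display) (X : measurableType d) (R : realType).
Context (G : Type) (mul : G -> G -> G) (one : G) (inv : G -> G).

Definition pmp_action (nu : probability X R) (act : G -> X -> X) : Prop :=
  [/\ (forall x, act one x = x),
      (forall g h x, act (mul g h) x = act g (act h x)),
      (forall g, measurable_fun setT (act g)) &
      (forall g A, measurable A -> nu (act g @^-1` A) = nu A)].

Definition essentially_free (nu : probability X R) (act : G -> X -> X) : Prop :=
  nu.-negligible [set x | exists g, g <> one /\ act g x = x].

Definition ergodic_action (nu : probability X R) (act : G -> X -> X) : Prop :=
  forall B : set X, measurable B ->
    (forall g x, B x -> B (act g x)) ->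
    (nu B = 0%E \/ nu (~` B) = 0%E).

Context (k : nat) (s : 'I_k -> G).

(* pi is Borel: each coordinate event {x | pi x e = 1} is measurable,
   i.e. pi is measurable for the product sigma-algebra on {0,1}^E *)
Definition borel_config_map (pi : X -> config G k) : Prop :=
  forall e, measurable [set x | pi x e].

Definition equivariant (act : G -> X -> X) (pi : X -> config G k) : Prop :=
  forall g x, pi (act g x) = config_act mul inv g (pi x).

Definition Rcl (act : G -> X -> X) (pi : X -> config G k) (x y : X) : Prop :=
  exists g, act (inv g) x = y /\ connected mul s (pi x) one g.

Definition Uinf (pi : X -> config G k) : set X :=
  [set x | infinite_set (cluster mul s (pi x) one)].

Definition Rcl_restricted_ergodic (nu : probability X R) (act : G -> X -> X)
  (pi : X -> config G k) : Prop :=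
  forall B : set X, measurable B -> B `<=` Uinf pi ->
    (forall x y, B x -> Uinf pi x -> Uinf pi y -> Rcl act pi x y -> B y) ->
    (nu B = 0%E \/ nu.-negligible (Uinf pi `\` B)).

Definition Cinf (pi : X -> config G k) : set (X * set G) :=
  [set p | exists v, p.2 = cluster mul s (pi p.1) v /\ infinite_set p.2].

(* Borel structure on X * (subsets of G) (subsets identified with {0,1}^G):
   the product sigma-algebra generated by measurable rectangles in X and
   the coordinate events {C | g \in C} *)
Definition pair_gen : set (set (X * set G)) :=
  [set S | (exists A : set X, measurable A /\ S = [set p | A p.1]) \/
           (exists g : G, S = [set p | p.2 g])].

Definition pair_borel (S : set (X * set G)) : Prop := <<s pair_gen >> S.

Definition pair_act (act : G -> X -> X) (g : G) (p : X * set G) : X * set G :=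
  (act g p.1, [set mul g c | c in p.2]).

Definition indistinguishable (nu : probability X R) (act : G -> X -> X)
  (pi : X -> config G k) : Prop :=
  forall A : set (X * set G), A `<=` Cinf pi -> pair_borel A ->
    (forall g p, A p <-> A (pair_act act g p)) ->
    nu.-negligible [set x | (exists C, A (x, C)) /\
                            (exists C', (Cinf pi `\` A) (x, C'))].

End Measures.

(* Main.v *)
Require Import Defs.
From HB Require Import structures.
From mathcomp Require Import all_boot all_order all_algebra.
From mathcomp Require Import all_classical all_reals all_analysis.
From Stdlib Require Import Relations.Relation_Operators.

Set Implicit Arguments.
Local Open Scope classical_set_scope.

Lemma exists_count_measurable d (T : measurableType d) (I : countType)
  (F : I -> set T) :
  (forall i, measurable (F i)) -> measurable [set x | exists i, F i x].
Proof.
move=> mF.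
have -> : [set x | exists i, F i x] =
  \bigcup_n (match unpickle n with Some i => F i | None => set0 end).
  apply/seteqP; split => x /=.
  - by case=> i Fi; exists (pickle i) => //; rewrite pickleK.
  - case=> n _; case: (unpickle n) => [i Fi|//]; by exists i.
by apply: bigcupT_measurable => n; case: (unpickle n).
Qed.

Lemma forall_count_measurable d (T : measurableType d) (I : countType)
  (F : I -> set T) :
  (forall i, measurable (F i)) -> measurable [set x | forall i, F i x].
Proof.
move=> mF.
have -> : [set x | forall i, F i x] = ~` [set x | exists i, (~` F i) x].
  apply/seteqP; split => x /=.
  - by move=> H [i Hi]; apply: Hi.
  - move=> H i; apply: contrapT => Hi; apply: H; by exists i.
by apply: measurableC; apply: exists_count_measurable => i; apply: measurableC.
Qed.

Lemma and_const_measurable d (T : measurableType d) (P : set T) (Q : Prop) :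
  measurable P -> measurable [set x | P x /\ Q].
Proof.
move=> mP; case: (pselect Q) => q.
- have -> : [set x | P x /\ Q] = P by apply/seteqP; split => x /= //; case.
  exact: mP.
- have -> : [set x | P x /\ Q] = set0 by apply/seteqP; split => x /= // [].
  exact: measurable0.
Qed.

Lemma iff_measurable d (T : measurableType d) (P Q : set T) :
  measurable P -> measurable Q -> measurable [set x | P x <-> Q x].
Proof.
move=> mP mQ.
have -> : [set x | P x <-> Q x] = (P `&` Q) `|` (~` P `&` ~` Q).
  apply/seteqP; split => x /=.
  - case: (pselect (P x)) => p [h1 h2]; [left; split=> //; exact: h1|].
    right; split => // q; apply: p; exact: h2.
  - by case => -[a b]; split => // c.
apply: measurableU; apply: measurableI => //; exact: measurableC.
Qed.

Section Graph.
Context (G : Type) (mul : G -> G -> G) (one : G) (inv : G -> G)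
  (Hg : is_group mul one inv) (k : nat) (s : 'I_k -> G).

Lemma mA a b c : mul a (mul b c) = mul (mul a b) c.
Proof. by case: Hg. Qed.
Lemma m1l a : mul one a = a. Proof. by case: Hg. Qed.
Lemma m1r a : mul a one = a. Proof. by case: Hg. Qed.
Lemma mVl a : mul (inv a) a = one. Proof. by case: Hg. Qed.
Lemma mVr a : mul a (inv a) = one. Proof. by case: Hg. Qed.

Lemma inv_mul_l g h : mul (inv (mul g h)) g = inv h.
Proof.
by rewrite -[X in X = _]m1r -(mVr h) mA -(mA (inv _)) mVl m1l.
Qed.

Lemma open_adj_sym w u v : open_adj mul s w u v -> open_adj mul s w v u.
Proof. by case=> i [H|H]; exists i; [right|left]. Qed.

Lemma conn_sym w u v : Defs.connected mul s w u v -> Defs.connected mul s w v u.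
Proof.
elim=> [a b H|a|a b c _ H1 _ H2].
- by apply: rt_step; exact: open_adj_sym.
- exact: rt_refl.
- exact: rt_trans H2 H1.
Qed.

Lemma conn_trans w u v z : Defs.connected mul s w u v -> Defs.connected mul s w v z ->
  Defs.connected mul s w u z.
Proof. exact: rt_trans. Qed.

Lemma cluster_eq w a b : Defs.connected mul s w a b ->
  Defs.cluster mul s w a = Defs.cluster mul s w b.
Proof.
move=> H; apply/seteqP; split => u; rewrite /Defs.cluster /= => Hu.
- exact: rt_trans (conn_sym H) Hu.
- exact: rt_trans H Hu.
Qed.

Lemma conn_act w h a b : Defs.connected mul s w a b ->
  Defs.connected mul s (config_act mul inv h w) (mul h a) (mul h b).
Proof.
elim=> [x y H|x|x y z _ H1 _ H2].
- apply: rt_step; case: H => i [[H1 H2]|[H1 H2]]; exists i.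
  + left; split; last by rewrite H2 mA.
    by rewrite /config_act /= mA mVl m1l.
  + right; split; last by rewrite H2 mA.
    by rewrite /config_act /= mA mVl m1l.
- exact: rt_refl.
- exact: rt_trans H1 H2.
Qed.

Lemma config_act_inv h (w : config G k) : config_act mul inv (inv h) (config_act mul inv h w) = w.
Proof.
apply: funext => -[i u]; by rewrite /config_act /= mA mVr m1l.
Qed.

Lemma cluster_image h w v :
  [set mul h c | c in Defs.cluster mul s w v] =
  Defs.cluster mul s (config_act mul inv h w) (mul h v).
Proof.
apply/seteqP; split => u /=.
- by case=> c Hc <-; exact: conn_act.
- move=> Hu; exists (mul (inv h) u); last by rewrite mA mVr m1l.
  have := conn_act (inv h) Hu; rewrite config_act_inv mA mVl m1l; exact.
Qed.

Lemma image_inv g (C : set G) :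
  [set mul (inv g) c | c in [set mul g c' | c' in C]] = C.
Proof.
apply/seteqP; split => u /=.
- by case=> c [c' Hc' <-] <-; rewrite mA mVl m1l.
- move=> Hu; exists (mul g u); first by exists u.
  by rewrite mA mVl m1l.
Qed.

Fixpoint reach (w : config G k) (n : nat) (u v : G) : Prop :=
  match n with
  | 0 => u = v
  | n.+1 => exists z, reach w n u z /\ open_adj mul s w z v
  end.

Lemma reach_cat w m n u z v : reach w n u z -> reach w m z v -> reach w (m + n) u v.
Proof.
elim: m v => [|m IH] v /= H1; first by move=> <-.
by case=> y [H2 H3]; exists y; split => //; exact: IH H2.
Qed.

Lemma connE w u v : Defs.connected mul s w u v <-> exists n, reach w n u v.
Proof.
split.
- elim=> [x y H|x|x y z _ [n1 H1] _ [n2 H2]].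
  + by exists 1, x.
  + by exists 0.
  + by exists (n2 + n1); exact: reach_cat H1 H2.
- case=> n; elim: n v => [|n IH] v /=; first by move=> <-; exact: rt_refl.
  case=> z [H1 H2]; apply: rt_trans (IH _ H1) _; exact: rt_step.
Qed.

End Graph.

Lemma enum_of_gen (G : Type) (mul : G -> G -> G) (one : G) (inv : G -> G)
  (k : nat) (s : 'I_k -> G) : generates mul one inv s ->
  exists f : nat -> G, forall g, exists n, f n = g.
Proof.
move=> Hgen.
exists (fun n => match @unpickle (seq ('I_k * bool)) n with
  | Some l => foldr (fun p acc => mul (if p.2 then s p.1 else inv (s p.1)) acc) one l
  | None => one end).
move=> g; have [l ->] := Hgen g; exists (pickle l); by rewrite pickleK.
Qed.

Lemma exists_surj_measurable d (T : measurableType d) (G : Type) (f : nat -> G)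
  (Hf : forall g, exists n, f n = g) (F : G -> set T) :
  (forall g, measurable (F g)) -> measurable [set x | exists g, F g x].
Proof.
move=> mF.
have -> : [set x | exists g, F g x] = [set x | exists n : nat, F (f n) x].
  apply/seteqP; split => x /=.
  - by case=> g Hg; have [n Hn] := Hf g; exists n; rewrite Hn.
  - by case=> n Hn; exists (f n).
by apply: exists_count_measurable => n; exact: mF.
Qed.

Lemma forall_surj_measurable d (T : measurableType d) (G : Type) (f : nat -> G)
  (Hf : forall g, exists n, f n = g) (F : G -> set T) :
  (forall g, measurable (F g)) -> measurable [set x | forall g, F g x].
Proof.
move=> mF.
have -> : [set x | forall g, F g x] = [set x | forall n : nat, F (f n) x].
  apply/seteqP; split => x /=.
  - by move=> H n.
  - by move=> H g; have [n <-] := Hf g.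
by apply: forall_count_measurable => n; exact: mF.
Qed.

Section Meas.
Context (d : measure_display) (X : measurableType d) (G : Type)
  (mul : G -> G -> G) (k : nat) (s : 'I_k -> G) (pi : X -> config G k)
  (Hpi : forall e, measurable [set x | pi x e])
  (f : nat -> G) (Hf : forall g, exists n, f n = g).

Lemma open_adj_meas u v : measurable [set x | open_adj mul s (pi x) u v].
Proof.
apply: (@exists_count_measurable _ _ 'I_k) => i.
apply: measurableU; apply: and_const_measurable; exact: Hpi.
Qed.

Lemma reach_meas n u v : measurable [set x | reach mul s (pi x) n u v].
Proof.
elim: n v => [|n IH] v /=.
- have -> : [set x : X | u = v] = [set x | setT x /\ u = v].
    by apply/seteqP; split => x /= //; case.
  exact: and_const_measurable.
- refine (exists_surj_measurable X f Hf (fun z => [set x | reach mul s (pi x) n u z /\ open_adj mul s (pi x) z v]) _) => z.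
  apply: measurableI; first exact: IH.
  exact: open_adj_meas.
Qed.

Lemma conn_meas u v : measurable [set x | Defs.connected mul s (pi x) u v].
Proof.
have -> : [set x | Defs.connected mul s (pi x) u v] =
  [set x | exists n : nat, reach mul s (pi x) n u v].
  by apply/seteqP; split => x /=; rewrite connE.
apply: exists_count_measurable => n; exact: reach_meas.
Qed.

End Meas.
Unset Implicit Arguments.

Theorem mainTheorem5
  (G : Type) (mul : G -> G -> G) (one : G) (inv : G -> G)
  (k : nat) (s : 'I_k -> G)
  (d : measure_display) (X : measurableType d) (R : realType)
  (nu : probability X R) (act : G -> X -> X) (pi : X -> config G k) :
  is_group mul one inv ->
  generates mul one inv s ->
  standard_borel X R ->
  pmp_action mul one nu act ->
  essentially_free one nu act ->
  ergodic_action nu act ->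
  borel_config_map pi ->
  equivariant mul inv act pi ->
  ~ nu.-negligible (Uinf mul one s pi) ->
  (Rcl_restricted_ergodic mul one inv s nu act pi <->
   indistinguishable mul s nu act pi).
Proof.
move=> Hg Hgen _ [Ha1 Ham Hmeas Hpres] _ Herg Hpi Heq _.
have [f Hf] := enum_of_gen Hgen.
have eA := mA Hg; have e1l := m1l Hg; have e1r := m1r Hg.
have eVl := mVl Hg; have eVr := mVr Hg.
have actK g x : act (inv g) (act g x) = x by rewrite -Ham eVl Ha1.
have act_inv_mul g h x : act (inv (mul g h)) (act g x) = act (inv h) x.
  by rewrite -Ham (inv_mul_l Hg).
have pre_meas g (A : set X) : measurable A -> measurable (act g @^-1` A).
  by move=> mA; have := Hmeas g measurableT A mA; rewrite setTI.
have pre_negl g (S : set X) : nu.-negligible S -> nu.-negligible (act g @^-1` S).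
  case=> N [mN N0 SN]; exists (act g @^-1` N); split.
  - exact: pre_meas.
  - by rewrite Hpres.
  - by move=> x /SN.
have clim h x v : [set mul h c | c in Defs.cluster mul s (pi x) v] =
    Defs.cluster mul s (pi (act h x)) (mul h v).
  by rewrite (cluster_image Hg) Heq.
have hcm := conn_meas X mul s pi Hpi f Hf.
split.
-
  move=> Herg' A AC Ab Ainv.
  pose T2 := g_sigma_algebraType (@pair_gen d X G).
  pose phi := fun x : X => ((x, Defs.cluster mul s (pi x) one) : T2).
  have mphi : measurable_fun setT phi.
    apply: (@measurability _ _ X T2 setT phi (@pair_gen d X G) erefl).
    move=> S [S' HS' <-]; case: HS' => [[A0 [mA0 ->]]|[g ->]]; rewrite setTI.
    + have -> : phi @^-1` [set p | A0 p.1] = A0 by [].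
      exact: mA0.
    + exact: hcm.
  pose B := phi @^-1` A.
  have mB : measurable B.
    by have := mphi measurableT A Ab; rewrite setTI.
  have BU : B `<=` Uinf mul one s pi.
    by move=> x /AC [v [_ Hinf]].
  have HBinv : forall x y, B x -> Uinf mul one s pi x -> Uinf mul one s pi y ->
      Rcl mul one inv s act pi x y -> B y.
    move=> x y Bx _ _ [g [<- Hc]].
    have := (Ainv (inv g) (x, Defs.cluster mul s (pi x) one)).1 Bx.
    rewrite /pair_act /= clim e1r.
    rewrite /B /phi /preimage /=.
    rewrite (cluster_eq (w:=pi (act (inv g) x)) (a:=inv g) (b:=one)) //.
    have := conn_act Hg (inv g) Hc; rewrite e1r eVl -Heq; exact.
  case: (Herg' B mB BU HBinv) => [B0|HU].
  + have negB : nu.-negligible B by exists B; split.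
    apply: (negligibleS _ (negligible_bigcup (fun n => pre_negl (inv (f n)) _ negB))).
    move=> x [[C HC] _].
    have [v [HCv _]] := AC _ HC; rewrite /= in HCv.
    have [n Hn] := Hf v; exists n => //=; rewrite Hn.
    have := (Ainv (inv v) (x, C)).1 HC.
    rewrite /pair_act /= HCv clim eVl; exact.
  + apply: (negligibleS _ (negligible_bigcup (fun n => pre_negl (inv (f n)) _ HU))).
    move=> x [_ [C' [HC' nA]]].
    have [v [HCv Hinf]] := HC'; rewrite /= in HCv Hinf.
    have [n Hn] := Hf v; exists n => //=; rewrite Hn; split.
    * rewrite /Uinf /= => Hfin; apply: Hinf; rewrite HCv.
      by have := finite_image (mul v) Hfin; rewrite clim e1r -Ham eVr Ha1.
    * move=> HB; apply: nA.
      have := (Ainv v _).1 HB; rewrite /pair_act /= clim e1r -Ham eVr Ha1 -HCv; exact.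
- move=> Hind B mB BU Binv.
  pose A := [set p : X * set G | exists g, (forall u, p.2 u <->
     Defs.connected mul s (pi p.1) g u) /\ B (act (inv g) p.1)].
  have cleq : forall (C : set G) x g,
      (forall u, C u <-> Defs.connected mul s (pi x) g u) ->
      C = Defs.cluster mul s (pi x) g.
    by move=> C x g H; apply/seteqP; split => u /H.
  have AC : A `<=` Cinf mul s pi.
    move=> [x C] [g [HC HB]]; rewrite /= in HC HB; exists g; split; first exact: cleq.
    rewrite /= (cleq _ _ _ HC) => Hfin.
    have := BU _ HB; rewrite /Uinf /=; apply.
    have := finite_image (mul (inv g)) Hfin; rewrite clim eVl; exact.
  pose T2 := g_sigma_algebraType (@pair_gen d X G).
  have Ab : pair_borel A.
    have gen1 : forall Q : set X, measurable Q ->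
        measurable ([set p : T2 | Q p.1]).
      move=> Q mQ; apply: sub_sigma_algebra; left; exists Q; split => //.
    have gen2 : forall u, measurable ([set p : T2 | p.2 u]).
      move=> u; apply: sub_sigma_algebra; right; by exists u.
    refine (exists_surj_measurable T2 f Hf (fun g => [set p : T2 |
      (forall u, p.2 u <-> Defs.connected mul s (pi p.1) g u) /\
      B (act (inv g) p.1)]) _) => g.
    apply: measurableI.
    + refine (forall_surj_measurable T2 f Hf (fun u => [set p : T2 |
        p.2 u <-> Defs.connected mul s (pi p.1) g u]) _) => u.
      apply: (@iff_measurable _ T2 [set p : T2 | p.2 u]
        [set p : T2 | Defs.connected mul s (pi p.1) g u]); first exact: gen2.
      exact: (gen1 [set x | Defs.connected mul s (pi x) g u] (hcm g u)).
    + exact: (gen1 (act (inv g) @^-1` B) (pre_meas _ _ mB)).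
  have Afwd : forall g p, A p -> A (pair_act mul act g p).
    move=> g [x C] [h [HC HB]]; rewrite /= in HC HB; exists (mul g h); split.
    + change (forall u, [set mul g c | c in C] u <->
        Defs.connected mul s (pi (act g x)) (mul g h) u).
      by rewrite (cleq _ _ _ HC) clim.
    + by rewrite /pair_act /= act_inv_mul.
  have Ainv : forall g p, A p <-> A (pair_act mul act g p).
    move=> g [x C]; split; first exact: Afwd.
    move=> H; have := Afwd (inv g) _ H.
    change (A (act (inv g) (act g x), [set mul (inv g) c | c in
      [set mul g c' | c' in C]]) -> A (x, C)).
    by rewrite actK (image_inv Hg).
  have Hbad := Hind A AC Ab Ainv.
  pose W := [set x | exists g, B (act (inv g) x)].
  have mW : measurable W.
    exact: (exists_surj_measurable X f Hf (fun g => act (inv g) @^-1` B)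
      (fun g => pre_meas _ _ mB)).
  have Winv : forall g x, W x -> W (act g x).
    by move=> g x [h Hh]; exists (mul g h); rewrite act_inv_mul.
  have inv1 : inv one = one by rewrite -[inv one]e1l eVr.
  case: (Herg W mW Winv) => [W0|W0].
  + left; apply/eqP; rewrite -measure_le0 -W0; apply: le_measure; rewrite ?inE //.
    by move=> x Bx; exists one; rewrite inv1 Ha1.
  + right; apply: (negligibleS _ (negligibleU (_ : nu.-negligible (~` W)) Hbad)).
    * move=> x [Ux nBx]; case: (pselect (W x)) => Wx; [right | by left].
      case: Wx => g Hg'; split.
      - exists (Defs.cluster mul s (pi x) g); exists g; split => //.
      - exists (Defs.cluster mul s (pi x) one); split.
        + by exists one; split.
        + case=> g' [Hc HB]; apply: nBx.
          have Hg1 : Defs.connected mul s (pi x) g' one.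
            by apply/Hc; apply: rt_refl.
          apply: (Binv _ _ HB (BU _ HB) Ux).
          exists (inv g'); split; first by rewrite -Ham eVl Ha1.
          have := conn_act Hg (inv g') Hg1; rewrite eVl e1r Heq; exact.
    * exists (~` W); split => //; exact: measurableC.
Qed.
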